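(* Let $\mathbf{u}\in[-1,1]^m$ satisfy $\langle\mathbf{1},\mathbf{u}\rangle=0$, and let $\mathcal{P}=\{\mathbf{p}\in[0,2]^m:\langle\mathbf{1},\mathbf{p}\rangle=m\}$. Consider the two-player zero-sum game $\Gamma_0$ in which the principal chooses $\mathbf{p}\in\mathcal{P}$, the agent chooses $\mathbf{x}\in\Delta(m)$, the agent's utility is $\langle\mathbf{u}+\mathbf{p},\mathbf{x}\rangle$ and the principal's utility is $-\langle\mathbf{u}+\mathbf{p},\mathbf{x}\rangle$. Then in every $\varepsilon$-Nash equilibrium $(\mathbf{p},\mathbf{x})$ of $\Gamma_0$, the principal's strategy has the form $\mathbf{p}=\mathbf{1}-\mathbf{u}+\mathbf{z}$ with $\|\mathbf{z}\|_1\le 4m\varepsilon$.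
   Context: $\mathbf{1}$ is the all-ones vector in $\mathbb{R}^m$ and $\Delta(m)$ is the probability simplex. An $\varepsilon$-Nash equilibrium is a pair in which neither player can gain more than $\varepsilon$ by a unilateral deviation. *)

(* Defs.v *)
From HB Require Import structures.
From mathcomp Require Import all_boot all_order all_algebra.
Set Implicit Arguments. Unset Strict Implicit. Unset Printing Implicit Defensive.
Import Order.TTheory GRing.Theory Num.Theory.
Local Open Scope ring_scope.

Definition dotv (R : realFieldType) (m : nat) (a b : 'rV[R]_m) : R :=
  \sum_(i < m) a 0 i * b 0 i.

Definition ones (R : realFieldType) (m : nat) : 'rV[R]_m := const_mx 1.

Definition norm1 (R : realFieldType) (m : nat) (z : 'rV[R]_m) : R :=
  \sum_(i < m) `|z 0 i|.

Definition in_simplex (R : realFieldType) (m : nat) (x : 'rV[R]_m) : Prop :=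
  (forall i, 0 <= x 0 i) /\ \sum_(i < m) x 0 i = 1.

Definition in_P (R : realFieldType) (m : nat) (p : 'rV[R]_m) : Prop :=
  (forall i, 0 <= p 0 i <= 2) /\ dotv (ones R m) p = m%:R.

Definition agent_util (R : realFieldType) (m : nat) (u p x : 'rV[R]_m) : R :=
  dotv (u + p) x.
Definition principal_util (R : realFieldType) (m : nat) (u p x : 'rV[R]_m) : R :=
  - dotv (u + p) x.

Definition eps_Nash (R : realFieldType) (m : nat) (u : 'rV[R]_m) (eps : R)
  (p x : 'rV[R]_m) : Prop :=
  in_P p /\ in_simplex x /\
  (forall p', in_P p' -> principal_util u p' x <= principal_util u p x + eps) /\
  (forall x', in_simplex x' -> agent_util u p x' <= agent_util u p x + eps).

(* Main.v *)
Require Import Defs.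
From HB Require Import structures.
From mathcomp Require Import all_boot all_order all_algebra.
From mathcomp Require Import ring lra.
Import Order.TTheory GRing.Theory Num.Theory.
Local Open Scope ring_scope.

Lemma dot_ones (R : realFieldType) (m : nat) (a : 'rV[R]_m) :
  dotv (ones R m) a = \sum_(i < m) a 0 i.
Proof. by apply: eq_bigr => i _; rewrite mxE mul1r. Qed.

Theorem lemma5p1 (R : realFieldType) (m : nat) (u : 'rV[R]_m) (eps : R)
  (hu : forall i, -1 <= u 0 i <= 1) (hu0 : dotv (ones R m) u = 0)
  (p x : 'rV[R]_m) (hNE : eps_Nash u eps p x) :
  exists z : 'rV[R]_m, p = ones R m - u + z /\ norm1 z <= 4 * m%:R * eps.
Proof.
case: hNE => [[hp0 hpm] [[hx0 hx1] [hprin hag]]].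
rewrite dot_ones in hu0; rewrite dot_ones in hpm.
have eps0 : 0 <= eps.
  have := hag x (conj hx0 hx1); rewrite /agent_util; lra.
have hdotx : forall a : 'rV[R]_m, dotv a x = \sum_(i < m) a 0 i * x 0 i by [].
have hP : in_P (ones R m - u).
  split.
    move=> i; rewrite !mxE; have := hu i; move=> /andP[h1 h2].
    apply/andP; split; lra.
  rewrite dot_ones.
  under eq_bigr => i _ do rewrite !mxE.
  by rewrite sumrB sumr_const card_ord hu0 subr0.
have hv : dotv (u + p) x <= 1 + eps.
  have := hprin _ hP; rewrite /principal_util.
  have -> : u + (ones R m - u) = ones R m by rewrite addrC subrK.
  rewrite dot_ones.
  rewrite hx1; lra.
have hvi : forall i, u 0 i + p 0 i <= 1 + 2 * eps.
  move=> i.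
  pose d : 'rV[R]_m := \row_j (j == i)%:R.
  have hd : in_simplex d.
    split; first by move=> j; rewrite mxE ler0n.
    rewrite (bigD1 i) //= big1 ?mxE ?eqxx ?addr0 // => j /negbTE hj.
    by rewrite mxE hj.
  have hdd : dotv (u + p) d = u 0 i + p 0 i.
    rewrite /dotv (bigD1 i) //= big1 ?mxE ?eqxx ?addr0 ?mulr1 //.
    move=> j hj; rewrite !mxE; move: hj; case: eqP => // _ _; by rewrite mulr0.
  have := hag d hd; rewrite /agent_util hdd => h; lra.
exists (p - ones R m + u); split.
  by apply/matrixP => i j; rewrite !mxE; ring.
rewrite /norm1.
have hsum : \sum_(i < m) (p - ones R m + u) 0 i = 0.
  under eq_bigr => i _ do rewrite !mxE.
  by rewrite big_split sumrB /= sumr_const card_ord hpm hu0 subrr add0r.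
apply: (le_trans (y := \sum_(i < m) (4 * eps - (p - ones R m + u) 0 i))).
  apply: ler_sum => i _; rewrite !mxE.
  have := hvi i; move=> h.
  case: (lerP 0 (p 0 i - 1 + u 0 i)) => hz.
    rewrite ger0_norm //; lra.
  rewrite ltr0_norm //; lra.
rewrite sumrB hsum subr0 sumr_const card_ord -mulr_natr; lra.
Qed.
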